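(* Suppose all declared valuation functions are symmetric submodular and the item cost functions $c_j:2^N\to\mathbb{R}_{\ge0}$ are arbitrary. Index the players by the iteration in which IACSM removes them from the active set, so that player $i$ is removed (and receives her final bundle $A_i$) in iteration $i$. Then $A_i\subseteq A_{i+1}$ for every $i\in\{1,\dots,n-1\}$.
   Context: Players $N=\{1,\dots,n\}$, items $M=\{1,\dots,m\}$, declared valuations $b_i:2^M\to\mathbb{R}_{\ge0}$ (non-decreasing), item cost functions $c_j:2^N\to\mathbb{R}_{\ge0}$. Symmetric: $f(S)=f(T)$ whenever $|S|=|T|$; submodular: $f(S\cup\{x\})-f(S)\ge f(T\cup\{x\})-f(T)$ for $S\subseteq T$, $x\notin T$. Mechanism IACSM (input: declared valuations $b$): maintain active set $X=N$, sets $T_j=N$ and cost shares $\chi_j=c_j(N)/n$ for all items $j$. While $X\neq\emptyset$: (1) every $i\in X$ computes $A_i\in\arg\max_{S\subseteq M}\{b_i(S)-\sum_{j\in S}\chi_j\}$, choosing among maximizers one of maximum cardinality $k$, and among those the $k$ items with smallest current $\chi_j$ (item ties by index); (2) choose $i^*\in X$ with $|A_{i^*}|$ minimum (ties by smallest index); (3) assign $A_{i^*}$ to $i^*$ permanently and remove $i^*$ from $X$; (4) for every item $j\notin A_{i^*}$ set $T_j:=T_j\setminus\{i^*\}$ and, if $T_j\ne\emptyset$, set $\chi_j:=\max\{\chi_j,c_j(T_j)/|T_j|\}$. Output the assigned bundles and payments $p_i=\sum_{j\in A_i}\chi_j$ with final cost shares. (If several players are removed ''simultaneously'' at the end, treat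 them as removed one per iteration in a consistent order.) *)

(* Defs.v *)
From HB Require Import structures.
From mathcomp Require Import all_boot all_order all_algebra.
Set Implicit Arguments. Unset Strict Implicit. Unset Printing Implicit Defensive.
Import Order.TTheory GRing.Theory Num.Theory.
Local Open Scope ring_scope.

Definition symmetric_setfun (T : finType) (R : realFieldType) (f : {set T} -> R) :=
  forall S U : {set T}, #|S| = #|U| -> f S = f U.

Definition submodular (T : finType) (R : realFieldType) (f : {set T} -> R) :=
  forall (S U : {set T}) (x : T), S \subset U -> x \notin U ->
    f (x |: U) - f U <= f (x |: S) - f S.

Definition nondecreasing_setfun (T : finType) (R : realFieldType) (f : {set T} -> R) :=
  forall S U : {set T}, S \subset U -> f S <= f U.

Definition nonneg_setfun (T : finType) (R : realFieldType) (f : {set T} -> R) :=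
  forall S : {set T}, 0 <= f S.

Section IACSM.
Variables (R : realFieldType) (n m : nat).
Variable b : 'I_n -> {set 'I_m} -> R.
Variable c : 'I_m -> {set 'I_n} -> R.

(* State of the mechanism: active set X, sets T_j, cost shares chi_j *)
Record state := State {
  st_act : {set 'I_n};
  st_T : 'I_m -> {set 'I_n};
  st_chi : 'I_m -> R }.

Definition utility (chi : 'I_m -> R) (i : 'I_n) (S : {set 'I_m}) : R :=
  b i S - \sum_(j in S) chi j.

Definition is_maximizer (chi : 'I_m -> R) (i : 'I_n) (S : {set 'I_m}) : bool :=
  [forall S' : {set 'I_m}, utility chi i S' <= utility chi i S].

Definition demand_card (chi : 'I_m -> R) (i : 'I_n) : nat :=
  \max_(S : {set 'I_m} | is_maximizer chi i S) #|S|.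

Definition preceding (chi : 'I_m -> R) (j : 'I_m) : {set 'I_m} :=
  [set j' | (chi j' < chi j) || ((chi j' == chi j) && (j' < j)%N)].

Definition smallest_items (chi : 'I_m -> R) (k : nat) : {set 'I_m} :=
  [set j | (#|preceding chi j| < k)%N].

Definition demand (chi : 'I_m -> R) (i : 'I_n) : {set 'I_m} :=
  smallest_items chi (demand_card chi i).

Definition selected (s : state) : option 'I_n :=
  [pick i in st_act s | [forall i' in st_act s,
     (#|demand (st_chi s) i| < #|demand (st_chi s) i'|)%N ||
     ((#|demand (st_chi s) i| == #|demand (st_chi s) i'|) && (i <= i')%N)]].

Definition step (s : state) : option ('I_n * {set 'I_m} * state) :=
  match selected s with
  | None => None
  | Some istar =>
      let A := demand (st_chi s) istar in
      let T' := fun j => if j \in A then st_T s j else st_T s j :\ istar in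
      let chi' := fun j =>
        if (j \notin A) && (T' j != set0)
        then Num.max (st_chi s j) (c j (T' j) / #|T' j|%:R)
        else st_chi s j in
      Some (istar, A, State (st_act s :\ istar) T' chi')
  end.

Fixpoint run (fuel : nat) (s : state) : seq ('I_n * {set 'I_m}) :=
  match fuel with
  | 0 => [::]
  | k.+1 => match step s with
            | None => [::]
            | Some (i, A, s') => (i, A) :: run k s'
            end
  end.

Definition init_state : state :=
  State [set: 'I_n] (fun _ => [set: 'I_n]) (fun j => c j [set: 'I_n] / n%:R).

Definition iacsm_bundles : seq {set 'I_m} := map snd (run n init_state).

Definition iacsm_outcome : seq ('I_n * {set 'I_m}) := run n init_state.

End IACSM.

(* Main.v *)
Require Import Defs.
From HB Require Import structures.
From mathcomp Require Import all_boot all_order all_algebra.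
From mathcomp Require Import lra zify.
Import Order.TTheory GRing.Theory Num.Theory.
Local Open Scope ring_scope.

Section Aux.
Variables (R : realFieldType) (m : nat) (chi : 'I_m -> R).

Definition prec (a j : 'I_m) := (chi a < chi j) || ((chi a == chi j) && (a < j)%N).

Lemma prec_irr a : ~~ prec a a.
Proof. by rewrite /prec ltxx eqxx ltnn. Qed.

Lemma prec_trans a b c : prec a b -> prec b c -> prec a c.
Proof.
move=> /orP[h1|/andP[/eqP e1 h1]] /orP[h2|/andP[/eqP e2 h2]]; rewrite /prec.
- by rewrite (lt_trans h1 h2).
- by rewrite -e2 h1.
- by rewrite e1 h2.
- by rewrite e1 e2 eqxx (ltn_trans h1 h2) orbT.
Qed.

Lemma prec_total a b : a != b -> prec a b || prec b a.
Proof.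
move=> nab; rewrite /prec; case: (ltgtP (chi a) (chi b)) => //= h.
by rewrite -neq_ltn.
Qed.

Lemma precedingE j : preceding chi j = [set a | prec a j].
Proof. by []. Qed.

Lemma prec_card_lt a b : prec a b -> (#|preceding chi a| < #|preceding chi b|)%N.
Proof.
move=> hab; apply: proper_card; apply/properP; split.
  apply/subsetP => x; rewrite !precedingE !inE => hx; exact: prec_trans hx hab.
by exists a; rewrite !precedingE !inE ?hab ?(negbTE (prec_irr a)).
Qed.

Lemma prec_card_ltm j : (#|preceding chi j| < m)%N.
Proof.
rewrite -[m in (_ < m)%N]card_ord -cardsT; apply: proper_card; apply/properP; split.
  exact: subsetT.
exists j; [exact: in_setT| rewrite inE; exact: prec_irr].
Qed.

Definition rk (j : 'I_m) : 'I_m := Ordinal (prec_card_ltm j).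

Lemma rk_inj : injective rk.
Proof.
move=> a b /(congr1 val) /= e; apply/eqP; apply/negPn/negP => nab.
case/orP: (prec_total _ _ nab) => /prec_card_lt; by rewrite e ltnn.
Qed.

Lemma card_SI K : (K <= m)%N -> #|smallest_items chi K| = K.
Proof.
move=> hK.
have -> : smallest_items chi K = rk @^-1: [set i : 'I_m | (i < K)%N].
  by apply/setP => j; rewrite !inE.
rewrite card_preimset; last exact: rk_inj.
have -> : [set i : 'I_m | (i < K)%N] = [set widen_ord hK i | i in 'I_K].
  apply/setP => i; rewrite inE; apply/idP/imsetP.
    by move=> hi; exists (Ordinal hi) => //; apply: val_inj.
  by case=> k _ ->; rewrite /= ltn_ord.
by rewrite card_imset ?card_ord //; by move=> x y /(congr1 val) /= e; apply: val_inj.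
Qed.

End Aux.

Section Dem.
Variables (R : realFieldType) (n m : nat) (b : 'I_n -> {set 'I_m} -> R).
Implicit Types chi : 'I_m -> R.

Lemma dc_le_m chi p : (demand_card b chi p <= m)%N.
Proof.
apply/bigmax_leqP => S _; rewrite -[m in (_ <= m)%N]card_ord; exact: max_card.
Qed.

Lemma card_demand chi p : #|demand b chi p| = demand_card b chi p.
Proof. by rewrite /demand card_SI // dc_le_m. Qed.

Lemma max_exists chi p : exists S, is_maximizer b chi p S.
Proof.
case: (arg_maxP (utility b chi p) (P:=predT) (i0:=set0)) => // S _ H.
by exists S; apply/forallP => S'; apply: H.
Qed.

Lemma dc_exists chi p : exists S, is_maximizer b chi p S /\ #|S| = demand_card b chi p.
Proof.
case: (max_exists chi p) => S0 H0.
rewrite /demand_card (bigop.bigmax_eq_arg _ H0).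
case: arg_maxnP => // S HS _; by exists S.
Qed.

Lemma SI_mono chi K K' : (K <= K')%N -> smallest_items chi K \subset smallest_items chi K'.
Proof. move=> h; apply/subsetP => j; rewrite !inE => hj; exact: leq_trans hj h. Qed.

Lemma SI_price chi chi' K :
  (forall j, j \in smallest_items chi K -> chi' j = chi j) ->
  (forall j, chi j <= chi' j) ->
  smallest_items chi K \subset smallest_items chi' K.
Proof.
move=> Heq Hle; apply/subsetP => j hj.
have hsub : preceding chi' j \subset preceding chi j.
  apply/subsetP => x; rewrite !precedingE !inE /prec (Heq j hj).
  move=> /orP[h|/andP[/eqP h hx]].
    by rewrite (le_lt_trans (Hle x) h).
  move: (Hle x); rewrite h le_eqVlt => /orP[/eqP->|->]; by rewrite ?eqxx ?hx ?orbT.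
move: hj; rewrite !inE => hj; exact: leq_ltn_trans (subset_leq_card hsub) hj.
Qed.

Lemma concave (f : {set 'I_m} -> R) :
  symmetric_setfun f -> submodular f ->
  forall (X Y : {set 'I_m}) x y, x \notin X -> y \notin Y -> (#|X| <= #|Y|)%N ->
  f (y |: Y) - f Y <= f (x |: X) - f X.
Proof.
move=> Hs Hm X Y x y hx hy hXY.
set X0 := [set z in take #|X| (enum Y)].
have hX0 : #|X0| = #|X|.
  rewrite cardsE; have/card_uniqP -> : uniq (take #|X| (enum Y)).
    by apply: take_uniq; exact: enum_uniq.
  by rewrite size_takel // -cardE.
have sX0 : X0 \subset Y.
  by apply/subsetP => z; rewrite inE => /mem_take; rewrite mem_enum.
have hyX0 : y \notin X0 by apply: contra hy; apply/subsetP.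
have := Hm X0 Y y sX0 hy.
rewrite (Hs (y |: X0) (x |: X)); last by rewrite !cardsU1 hx hyX0 hX0.
by rewrite (Hs X0 X).
Qed.

Lemma dc_mono p chi chi' K :
  symmetric_setfun (b p) -> submodular (b p) ->
  (K <= demand_card b chi p)%N ->
  (forall j, j \in smallest_items chi K -> chi' j = chi j) ->
  (forall j, chi j <= chi' j) ->
  (K <= demand_card b chi' p)%N.
Proof.
move=> Hs Hm hK Heq Hle.
rewrite leqNgt; apply/negP => hlt.
case: (dc_exists chi' p) => S' [HS' cS'].
case: (dc_exists chi p) => T [HT cT].
have cA : #|smallest_items chi K| = K.
  by apply: card_SI; apply: leq_trans hK (dc_le_m _ _).
have : ~~ (smallest_items chi K \subset S').
  apply/negP => /subset_leq_card; rewrite cA cS' leqNgt hlt //.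
case/subsetPn => j jA jS.
have [t tT hjt] : exists2 t, t \in T & chi j <= chi t.
  case: (boolP [exists t in T, chi j <= chi t]).
    by case/existsP => t /andP[? ?]; exists t.
  rewrite negb_exists => /forallP H; exfalso.
  have sub : T \subset preceding chi j.
    apply/subsetP => t tT; rewrite precedingE inE /prec.
    by have := H t; rewrite tT /= -ltNge => ->.
  move: jA; rewrite inE => jA.
  have := subset_leq_card sub; rewrite cT => h.
  by have := leq_trans (leq_ltn_trans h jA) hK; rewrite ltnn.
have marg : chi t <= b p T - b p (T :\ t).
  move/forallP: HT => /(_ (T :\ t)); rewrite /utility (big_setD1 _ tT) /=.
  move=> h; lra.
have tD : t \notin T :\ t by rewrite !inE eqxx.
have cTD : (#|S'| <= #|T :\ t|)%N.
  move: (cardsD1 t T); rewrite tT cT add1n => e.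
  have : (#|S'| < demand_card b chi p)%N by rewrite cS'; exact: leq_trans hlt hK.
  by rewrite e ltnS.
have := @concave (b p) Hs Hm _ _ _ _ jS tD cTD; rewrite setD1K // => hc.
have hj' : chi' j = chi j by apply: Heq.
have Hmax : is_maximizer b chi' p (j |: S').
  apply/forallP => S''; move/forallP: HS' => /(_ S'').
  rewrite /utility (big_setU1 _ jS) /= hj' => h; lra.
have := @leq_bigmax_cond _ _ (fun S : {set 'I_m} => #|S|) _ Hmax.
by rewrite -/(demand_card b chi' p) cardsU1 jS -cS' add1n ltnn.
Qed.

End Dem.

Section Run.
Variables (R : realFieldType) (n m : nat) (b : 'I_n -> {set 'I_m} -> R)
  (c : 'I_m -> {set 'I_n} -> R).

Lemma step_spec s i A s' : step b c s = Some (i, A, s') ->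
  [/\ i \in st_act s, A = demand b (st_chi s) i,
      (forall i', i' \in st_act s -> (#|A| <= #|demand b (st_chi s) i'|)%N),
      st_act s' = st_act s :\ i &
      ((forall j, j \in A -> st_chi s' j = st_chi s j) /\
      (forall j, st_chi s j <= st_chi s' j))].
Proof.
rewrite /step /selected; case: pickP => [i0 /andP[hi /forallP H]|//] [<- <- <-] /=.
split => //; [|split].
- move=> i' hi'; have := H i'; rewrite hi' /= => /orP[/ltnW //|/andP[/eqP -> _]] //.
- by move=> j hj; rewrite hj.
- by move=> j; case: ifP => _ //; rewrite le_max lexx.
Qed.

Lemma step_exists s : st_act s != set0 -> exists i A s', step b c s = Some (i, A, s').
Proof.
case/set0Pn => i0 hi0.
rewrite /step /selected; case: pickP => [i _|H]; first by eauto.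
exfalso.
pose f (i : 'I_n) := (#|demand b (st_chi s) i| * n + i)%N.
case: (@arg_minnP _ i0 (mem (st_act s)) f hi0) => k hk Hmin.
move/negP: (H k); apply; apply/andP; split; first exact: hk.
apply/forallP => i'; apply/implyP => hi'.
have := Hmin i' hi'; rewrite /f.
have := ltn_ord k; have := ltn_ord i'.
move: (#|demand b (st_chi s) k|) (#|demand b (st_chi s) i'|) (nat_of_ord k) (nat_of_ord i') => x y u v.
move=> hv hu h.
case: (ltngtP x y) => //= hxy.
  exfalso; move: h; apply/negP; rewrite -ltnNge.
  have : (y * n + v < (y.+1) * n)%N by rewrite mulSn addnC ltn_add2r.
  move=> h1; apply: (leq_trans h1 _). apply: leq_trans (leq_addr _ _). by rewrite leq_mul2r hxy orbT.
by move: h; rewrite hxy leq_add2l.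
Qed.

Lemma step_subset s i A s' i' A' s'' :
  (forall p, symmetric_setfun (b p)) -> (forall p, submodular (b p)) ->
  step b c s = Some (i, A, s') -> step b c s' = Some (i', A', s'') -> A \subset A'.
Proof.
move=> Hs Hm /step_spec [hi eA Hsel eact [Heq Hle]] /step_spec [hi' eA' _ _ _].
have hi's : i' \in st_act s by move: hi'; rewrite eact inE => /andP[].
have hK : (#|A| <= demand_card b (st_chi s) i')%N by rewrite -card_demand; exact: Hsel.
have cA : #|A| = demand_card b (st_chi s) i by rewrite eA card_demand.
have AE : A = smallest_items (st_chi s) #|A| by rewrite cA eA.
have hK' : (#|A| <= demand_card b (st_chi s') i')%N.
  apply: (@dc_mono _ _ _ b i' (st_chi s) (st_chi s') #|A| (Hs i') (Hm i') hK) => // j; rewrite -AE; exact: Heq.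
rewrite eA' /demand.
apply: (subset_trans _ (@SI_mono _ _ _ _ _ hK')).
rewrite {1}AE; apply: SI_price => // j; rewrite -AE; exact: Heq.
Qed.

Lemma run_size fuel s : #|st_act s| = fuel -> size (run b c fuel s) = fuel.
Proof.
elim: fuel s => [//|k IH] s hs /=.
have : st_act s != set0 by rewrite -card_gt0 hs.
case/step_exists => i [A [s' e]]; rewrite e /=.
case/step_spec: e => hi _ _ eact _; congr S; apply: IH.
by move: (cardsD1 i (st_act s)); rewrite hi hs -eact add1n => -[].
Qed.

Lemma run_sub fuel s :
  (forall p, symmetric_setfun (b p)) -> (forall p, submodular (b p)) ->
  #|st_act s| = fuel -> forall k, (k.+1 < fuel)%N ->
  nth set0 (map snd (run b c fuel s)) k \subset nth set0 (map snd (run b c fuel s)) k.+1.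
Proof.
move=> Hs Hm; elim: fuel s => [//|f IH] s hs k hk /=.
have : st_act s != set0 by rewrite -card_gt0 hs.
case/step_exists => i [A [s' e]]; rewrite e /=.
have hs' : #|st_act s'| = f.
  case/step_spec: (e) => hi _ _ eact _.
  by move: (cardsD1 i (st_act s)); rewrite hi hs -eact add1n => -[].
case: k hk => [|k] hk.
  clear hs; case: f IH hs' hk => [//|f] IH hs' _ /=.
  have : st_act s' != set0 by rewrite -card_gt0 hs'.
  case/step_exists => i' [A' [s'' e']]; rewrite e' /=.
  exact: step_subset Hs Hm e e'.
by apply: IH.
Qed.

End Run.

Theorem mainTheorem5 (R : realFieldType) (n m : nat)
    (b : 'I_n -> {set 'I_m} -> R) (c : 'I_m -> {set 'I_n} -> R) :
  (forall i, nonneg_setfun (b i)) ->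
  (forall i, nondecreasing_setfun (b i)) ->
  (forall i, symmetric_setfun (b i)) ->
  (forall i, submodular (b i)) ->
  (forall j, nonneg_setfun (c j)) ->
  let out := iacsm_outcome b c in
  size out = n /\
  (forall k : nat, (k.+1 < n)%N ->
     nth set0 (map snd out) k \subset nth set0 (map snd out) k.+1).
Proof.
move=> _ _ Hs Hm _ out.
have hc : #|st_act (init_state c)| = n by rewrite /= cardsT card_ord.
split; first exact: run_size.
exact: run_sub.
Qed.
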